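(* Let $\mathbf A=\bigoplus_{i\in I}\mathbf H_i$ be a BL-chain represented as an ordinal sum of totally ordered Wajsberg hoops, and let $\{a_x\}_{x\in X}$ be a family of elements of $A$. (1) If $\inf_x a_x$ and $\inf_x a_x^2$ exist and $(\inf_x a_x)^2=\inf_x a_x^2$, then $\{a_x\}_{x\in X}$ is $\wedge$-connected or $\inf_x a_x$ is idempotent. (2) If $\sup_x a_x$ exists, then $\{a_x\}_{x\in X}$ is $\vee$-connected or $\sup_x a_x$ is idempotent.
   Context: A BL-algebra is an algebra $(A,\cdot,\to,\wedge,\vee,0,1)$ such that $(A,\wedge,\vee,0,1)$ is a bounded lattice, $(A,\cdot,1)$ is a commutative monoid, $x\cdot y\le z$ iff $x\le y\to z$, $x\wedge y=x\cdot(x\to y)$ and $(x\to y)\vee(y\to x)=1$; a BL-chain is a totally ordered BL-algebra; $a^2=a\cdot a$, and $a$ is idempotent if $a^2=a$. A hoop is an algebra $(H,\cdot,\to,1)$ such that $(H,\cdot,1)$ is a commutative monoid and $x\to x=1$, $x\cdot(x\to y)=y\cdot(y\to x)$, $x\to(y\to z)=(x\cdot y)\to z$; a Wajsberg hoop additionally satisfies $(x\to y)\to y=(y\to x)\to x$. Given a totally ordered index set $I$ and hoops $\mathbf H_i$ with $H_i\cap H_j=\{1\}$ for $i\ne j$, the ordinal sum $\bigoplus_{i\in I}\mathbf H_i$ has universe $\bigcup_iH_i$ with: $x\to y=x\to^{\mathbf H_i}y$ if $x,y\in H_i$; $x\to y=y$ if $x\in H_i,y\in H_j,i>j$; $x\to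 y=1$ if $x\in H_i\setminus\{1\},y\in H_j,i<j$; $x\cdot y=x\cdot^{\mathbf H_i}y$ if $x,y\in H_i$; $x\cdot y=y$ if $x\in H_i,y\in H_j\setminus\{1\},i>j$; $x\cdot y=x$ if $x\in H_i\setminus\{1\},y\in H_j,i<j$. For $C\subseteq A$ with $\bigwedge C$ existing, $C$ is $\wedge$-connected if there are $i\in I$ and $c\in C$ with $\bigwedge C\in H_i$ and $c\in H_i$; dually, for $\bigvee C$ existing, $C$ is $\vee$-connected if there are $i\in I$ and $c\in C$ with $\bigvee C\in H_i$ and $c\in H_i$. *)

(* Defs.v *)
Record BLAlgebra := {
  carrier :> Type;
  bl_mul : carrier -> carrier -> carrier;
  bl_imp : carrier -> carrier -> carrier;
  bl_meet : carrier -> carrier -> carrier;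
  bl_join : carrier -> carrier -> carrier;
  bl_zero : carrier;
  bl_one : carrier;
  meetA : forall x y z, bl_meet x (bl_meet y z) = bl_meet (bl_meet x y) z;
  joinA : forall x y z, bl_join x (bl_join y z) = bl_join (bl_join x y) z;
  meetC : forall x y, bl_meet x y = bl_meet y x;
  joinC : forall x y, bl_join x y = bl_join y x;
  meet_absorb : forall x y, bl_meet x (bl_join x y) = x;
  join_absorb : forall x y, bl_join x (bl_meet x y) = x;
  meet0 : forall x, bl_meet bl_zero x = bl_zero;
  join1 : forall x, bl_join x bl_one = bl_one;
  mulA : forall x y z, bl_mul x (bl_mul y z) = bl_mul (bl_mul x y) z;
  mulC : forall x y, bl_mul x y = bl_mul y x;
  mul1 : forall x, bl_mul x bl_one = x;
  (* residuation, w.r.t. the lattice order x <= y iff x meet y = x *)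
  residuation : forall x y z,
    bl_meet (bl_mul x y) z = bl_mul x y <-> bl_meet x (bl_imp y z) = x;
  divisibility : forall x y, bl_meet x y = bl_mul x (bl_imp x y);
  prelinearity : forall x y, bl_join (bl_imp x y) (bl_imp y x) = bl_one
}.

Arguments bl_mul {b}. Arguments bl_imp {b}. Arguments bl_meet {b}.
Arguments bl_join {b}. Arguments bl_zero {b}. Arguments bl_one {b}.

Section BL.
Variable A : BLAlgebra.

Definition ble (x y : A) : Prop := bl_meet x y = x.

Definition is_BL_chain : Prop := forall x y : A, ble x y \/ ble y x.

Definition idempotent (a : A) : Prop := bl_mul a a = a.

Definition is_inf {X : Type} (a : X -> A) (m : A) : Prop :=
  (forall x, ble m (a x)) /\ (forall l, (forall x, ble l (a x)) -> ble l m).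

Definition is_sup {X : Type} (a : X -> A) (s : A) : Prop :=
  (forall x, ble (a x) s) /\ (forall u, (forall x, ble (a x) u) -> ble s u).

Definition is_tot_wajsberg_subhoop (H : A -> Prop) : Prop :=
  H bl_one /\
  (forall x y, H x -> H y -> H (bl_mul x y)) /\
  (forall x y, H x -> H y -> H (bl_imp x y)) /\
  (forall x y z, H x -> H y -> H z -> bl_mul x (bl_mul y z) = bl_mul (bl_mul x y) z) /\
  (forall x y, H x -> H y -> bl_mul x y = bl_mul y x) /\
  (forall x, H x -> bl_mul x bl_one = x) /\
  (forall x, H x -> bl_imp x x = bl_one) /\
  (forall x y, H x -> H y -> bl_mul x (bl_imp x y) = bl_mul y (bl_imp y x)) /\
  (forall x y z, H x -> H y -> H z ->
      bl_imp x (bl_imp y z) = bl_imp (bl_mul x y) z) /\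
  (forall x y, H x -> H y ->
      bl_imp (bl_imp x y) y = bl_imp (bl_imp y x) x) /\
  (* totally ordered (hoop order: x <= y iff x -> y = 1) *)
  (forall x y, H x -> H y -> bl_imp x y = bl_one \/ bl_imp y x = bl_one).

Definition is_ordinal_sum (I : Type) (ltI : I -> I -> Prop) (H : I -> A -> Prop) : Prop :=
  (forall i, ~ ltI i i) /\
  (forall i j k, ltI i j -> ltI j k -> ltI i k) /\
  (forall i j, ltI i j \/ i = j \/ ltI j i) /\
  (forall i, is_tot_wajsberg_subhoop (H i)) /\
  (forall i j x, i <> j -> H i x -> H j x -> x = bl_one) /\
  (forall x : A, exists i, H i x) /\
  (* operations of the ordinal sum (same component: restricted operations) *)
  (forall i j x y, H i x -> H j y -> ltI j i -> bl_imp x y = y) /\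
  (forall i j x y, H i x -> H j y -> ltI i j -> x <> bl_one -> bl_imp x y = bl_one) /\
  (forall i j x y, H i x -> H j y -> ltI j i -> y <> bl_one -> bl_mul x y = y) /\
  (forall i j x y, H i x -> H j y -> ltI i j -> x <> bl_one -> bl_mul x y = x).

Definition meet_connected {I X : Type} (H : I -> A -> Prop) (a : X -> A) (m : A) : Prop :=
  exists i, exists c : X, H i m /\ H i (a c).

Definition join_connected {I X : Type} (H : I -> A -> Prop) (a : X -> A) (s : A) : Prop :=
  exists i, exists c : X, H i s /\ H i (a c).

End BL.

(* Main.v *)
Require Import Defs.
From Stdlib Require Import Classical.

Section L.
Variable A : BLAlgebra.

Lemma meet_id (x : A) : bl_meet x x = x.
Proof. rewrite <- (join_absorb A x x) at 2. apply meet_absorb. Qed.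

Lemma le_top (x : A) : ble A x bl_one.
Proof. unfold ble. rewrite <- (join1 A x). apply meet_absorb. Qed.

Lemma antisym (x y : A) : ble A x y -> ble A y x -> x = y.
Proof. unfold ble; intros H1 H2. rewrite <- H1. rewrite meetC. exact H2. Qed.

Lemma le_trans (x y z : A) : ble A x y -> ble A y z -> ble A x z.
Proof. unfold ble; intros H1 H2. rewrite <- H1 at 1. rewrite <- meetA, H2. exact H1. Qed.

Lemma mul1l (x : A) : bl_mul bl_one x = x.
Proof. rewrite mulC. apply mul1. Qed.

Lemma imp_le (x y : A) : bl_imp x y = bl_one -> ble A x y.
Proof.
  intro h. pose proof (proj2 (residuation A bl_one x y)) as R.
  rewrite mul1l in R. apply R. rewrite h. apply meet_id.
Qed.

Lemma imp_self (x : A) : bl_imp x x = bl_one.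
Proof.
  apply antisym. apply le_top.
  pose proof (proj1 (residuation A bl_one x x)) as R.
  rewrite mul1l in R. apply R. apply meet_id.
Qed.

Lemma sq_le (x : A) : ble A (bl_mul x x) x.
Proof.
  apply (proj2 (residuation A x x x)). rewrite imp_self. apply le_top.
Qed.
End L.

Theorem mainTheorem11 (A : BLAlgebra) (I : Type) (ltI : I -> I -> Prop)
  (H : I -> A -> Prop) (X : Type) (a : X -> A) :
  is_BL_chain A ->
  is_ordinal_sum A I ltI H ->
  (forall m m2 : A,
      is_inf A a m ->
      is_inf A (fun x => bl_mul (a x) (a x)) m2 ->
      bl_mul m m = m2 ->
      meet_connected A H a m \/ idempotent A m) /\
  (forall s : A,
      is_sup A a s ->
      join_connected A H a s \/ idempotent A s).
Proof.
  intros _ [irr [tr [tri [hoop [disj [cover [impgt [implt [mulgt mullt]]]]]]]]].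
  split.
  - intros m m2 [lb glb] [_ glb2] e.
    destruct (classic (meet_connected A H a m)) as [c|nc]; [left; exact c|right].
    destruct (classic (m = bl_one)) as [e1|n1].
    { subst m. unfold idempotent. apply mul1. }
    destruct (cover m) as [i hi].
    unfold idempotent. apply antisym; [apply sq_le|]. rewrite e. apply glb2.
    intro x. destruct (cover (a x)) as [j hj].
    destruct (tri i j) as [lij|[eij|lji]].
    + apply imp_le. eapply (implt i j); eauto.
      destruct (hoop j) as [_ [hm _]]. apply hm; auto.
    + subst j. exfalso. apply nc. exists i, x. auto.
    + destruct (classic (a x = bl_one)) as [ea|na].
      * rewrite ea, mul1. apply le_top.
      * exfalso. assert (a x = m).
        { apply antisym; [|apply lb]. apply imp_le. eapply (implt j i); eauto. }
        apply n1. eapply (disj j i); eauto.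
        { intro; subst; apply (irr i); auto. }
        rewrite <- H0; auto.
  - intros s [ub lub].
    destruct (classic (join_connected A H a s)) as [c|nc]; [left; exact c|right].
    destruct (classic (s = bl_one)) as [e1|n1].
    { subst s. unfold idempotent. apply mul1. }
    destruct (cover s) as [i hi].
    unfold idempotent. apply antisym; [apply sq_le|]. apply lub.
    intro x. destruct (cover (a x)) as [j hj].
    destruct (tri i j) as [lij|[eij|lji]].
    + exfalso. assert (a x = s).
      { apply antisym; [apply ub|]. apply imp_le. eapply (implt i j); eauto. }
      apply nc. exists i, x. rewrite H0. auto.
    + subst j. exfalso. apply nc. exists i, x. auto.
    + destruct (classic (a x = bl_one)) as [ea|na].
      * exfalso. apply n1. apply antisym; [apply le_top|]. rewrite <- ea. apply ub.
      * apply imp_le. eapply (implt j i); eauto.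
        destruct (hoop i) as [_ [hm _]]. apply hm; auto.
Qed.
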